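(* (i) Every finite $\mathbf{HpsUL}^\ast$-chain is an $\mathbf{HpsUL}^\ast_\omega$-chain. (ii) Every finite $\mathbf{HpsUL}^\ast$-algebra is an $\mathbf{HpsUL}^\ast_\omega$-algebra.
   Context: An $\mathbf{HpsUL}$-algebra is a structure $\mathcal A=\langle A,\wedge,\vee,\cdot,\backslash,/,e,f,\bot,\top\rangle$ such that: - $\langle A,\wedge,\vee,\bot,\top\rangle$ is a bounded lattice; - $\langle A,\cdot,e\rangle$ is a monoid; - for all $x,y,z$: $xy\le z$ iff $x\le z/y$ iff $y\le x\backslash z$; - for all $x,y,u,v$: $\lambda_u((x\vee y)\backslash x)\vee\rho_v((x\vee y)\backslash y)=e$, where $\lambda_a(b)=(a\backslash(ba))\wedge e$ and $\rho_a(b)=((ab)/a)\wedge e$. The constant $f$ is arbitrary. An $\mathbf{HpsUL}^\ast$-algebra is one additionally satisfying weak commutativity: $xy\le e$ implies $yx\le e$. An $\mathbf{HpsUL}^\ast_\omega$-algebra is an $\mathbf{HpsUL}^\ast$-algebra satisfying $x\backslash e=x^2\backslash e$ for all $x$, where $x^2=x\cdot x$. A chain is a linearly ordered such algebra. *)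

(* Defs.v *)
From mathcomp Require Import all_boot.
Set Implicit Arguments.
Unset Strict Implicit.
Unset Printing Implicit Defensive.

(* Signature <A, meet, join, mul, \, /, e, f, bot, top>.
   ldiv x z = x \ z ;  rdiv z y = z / y. *)
Record hpsul_ops (A : Type) := HpsulOps {
  hmeet : A -> A -> A;
  hjoin : A -> A -> A;
  hmul  : A -> A -> A;
  hldiv : A -> A -> A;
  hrdiv : A -> A -> A;
  he    : A;
  hf    : A;
  hbot  : A;
  htop  : A
}.

Section Defs.
Variables (A : Type) (S : hpsul_ops A).

Definition hle (x y : A) : Prop := hmeet S x y = x.

Definition bounded_lattice : Prop :=
  [/\ (forall x y z, hmeet S x (hmeet S y z) = hmeet S (hmeet S x y) z),
      (forall x y z, hjoin S x (hjoin S y z) = hjoin S (hjoin S x y) z),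
      (forall x y, hmeet S x y = hmeet S y x) &
      (forall x y, hjoin S x y = hjoin S y x)] /\
  [/\ (forall x y, hmeet S x (hjoin S x y) = x),
      (forall x y, hjoin S x (hmeet S x y) = x) &
      (forall x, hle (hbot S) x /\ hle x (htop S))].

Definition monoid_law : Prop :=
  [/\ (forall x y z, hmul S x (hmul S y z) = hmul S (hmul S x y) z),
      (forall x, hmul S (he S) x = x) &
      (forall x, hmul S x (he S) = x)].

Definition residuated : Prop :=
  forall x y z,
    (hle (hmul S x y) z <-> hle x (hrdiv S z y)) /\
    (hle x (hrdiv S z y) <-> hle y (hldiv S x z)).

Definition hlambda (a b : A) : A := hmeet S (hldiv S a (hmul S b a)) (he S).
Definition hrho (a b : A) : A := hmeet S (hrdiv S (hmul S a b) a) (he S).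

Definition psl_identity : Prop :=
  forall x y u v,
    hjoin S (hlambda u (hldiv S (hjoin S x y) x))
            (hrho v (hldiv S (hjoin S x y) y)) = he S.

Definition HpsUL : Prop :=
  [/\ bounded_lattice, monoid_law, residuated & psl_identity].

Definition weakly_commutative : Prop :=
  forall x y, hle (hmul S x y) (he S) -> hle (hmul S y x) (he S).

Definition HpsUL_star : Prop := HpsUL /\ weakly_commutative.

Definition omega_law : Prop :=
  forall x, hldiv S x (he S) = hldiv S (hmul S x x) (he S).

Definition HpsUL_star_omega : Prop := HpsUL_star /\ omega_law.

Definition is_chain : Prop := forall x y, hle x y \/ hle y x.

End Defs.

(* Main.v *)
Require Import Defs.
From mathcomp Require Import all_boot.
From Stdlib Require Import Classical.
Set Implicit Arguments.
Unset Strict Implicit.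

Section Alg.
Variables (T : finType) (S : hpsul_ops T).
Hypothesis HS : HpsUL S.

Local Notation mt := (hmeet S).
Local Notation jn := (hjoin S).
Local Notation mul := (hmul S).
Local Notation ld := (hldiv S).
Local Notation rd := (hrdiv S).
Local Notation e := (he S).
Local Notation le := (hle S).
Local Notation lam := (hlambda S).
Local Notation rho := (hrho S).

Lemma meetA x y z : mt x (mt y z) = mt (mt x y) z.
Proof. by case: HS => [[[h _ _ _] _] _ _ _]. Qed.
Lemma joinA x y z : jn x (jn y z) = jn (jn x y) z.
Proof. by case: HS => [[[_ h _ _] _] _ _ _]. Qed.
Lemma meetC x y : mt x y = mt y x.
Proof. by case: HS => [[[_ _ h _] _] _ _ _]. Qed.
Lemma joinC x y : jn x y = jn y x.
Proof. by case: HS => [[[_ _ _ h] _] _ _ _]. Qed.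
Lemma abs1 x y : mt x (jn x y) = x.
Proof. by case: HS => [[_ [h _ _]] _ _ _]. Qed.
Lemma abs2 x y : jn x (mt x y) = x.
Proof. by case: HS => [[_ [_ h _]] _ _ _]. Qed.
Lemma mulA x y z : mul x (mul y z) = mul (mul x y) z.
Proof. by case: HS => [_ [h _ _] _ _]. Qed.
Lemma mul1l x : mul e x = x.
Proof. by case: HS => [_ [_ h _] _ _]. Qed.
Lemma mul1r x : mul x e = x.
Proof. by case: HS => [_ [_ _ h] _ _]. Qed.
Lemma res1 x y z : le (mul x y) z <-> le y (ld x z).
Proof. case: HS => [_ _ h _]; case: (h x y z) => [h1 h2]; tauto. Qed.
Lemma res2 x y z : le (mul x y) z <-> le x (rd z y).
Proof. case: HS => [_ _ h _]; case: (h x y z) => [h1 h2]; tauto. Qed.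
Lemma psl x y u v :
  jn (lam u (ld (jn x y) x)) (rho v (ld (jn x y) y)) = e.
Proof. by case: HS => [_ _ _ h]; apply: h. Qed.

Lemma le_refl x : le x x.
Proof. have h := abs1 x (mt x x); rewrite abs2 in h; exact: h. Qed.
Lemma le_trans x y z : le x y -> le y z -> le x z.
Proof. rewrite /hle => h1 h2. by rewrite -{1}h1 -meetA h2 h1. Qed.
Lemma le_anti x y : le x y -> le y x -> x = y.
Proof. rewrite /hle => h1 h2. by rewrite -h1 meetC h2. Qed.
Lemma meet_l x y : le (mt x y) x.
Proof. by rewrite /hle meetC meetA le_refl. Qed.
Lemma meet_r x y : le (mt x y) y.
Proof. by rewrite /hle -meetA le_refl. Qed.
Lemma meet_glb z x y : le z x -> le z y -> le z (mt x y).
Proof. rewrite /hle => h1 h2. by rewrite meetA h1 h2. Qed.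
Lemma le_join x y : le x y <-> jn x y = y.
Proof.
split; rewrite /hle => h.
  by rewrite -h joinC meetC abs2.
by rewrite -h abs1.
Qed.
Lemma join_l x y : le x (jn x y).
Proof. exact: abs1. Qed.
Lemma join_r x y : le y (jn x y).
Proof. rewrite joinC; exact: join_l. Qed.
Lemma join_lub x y z : le x z -> le y z -> le (jn x y) z.
Proof.
move=> /le_join h1 /le_join h2; apply/le_join. by rewrite -joinA h2 h1.
Qed.
Lemma join_mono x y z : le x y -> le (jn z x) (jn z y).
Proof. move=> h; apply: join_lub; first exact: join_l. exact: le_trans h (join_r _ _). Qed.

Lemma mul_monor a b c : le a b -> le (mul c a) (mul c b).
Proof. move=> h; apply/res1; apply: le_trans h _; apply/res1; exact: le_refl. Qed.
Lemma mul_monol a b c : le a b -> le (mul a c) (mul b c).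
Proof. move=> h; apply/res2; apply: le_trans h _; apply/res2; exact: le_refl. Qed.
Lemma mul_joinr c a b : mul c (jn a b) = jn (mul c a) (mul c b).
Proof.
apply: le_anti.
  apply/res1; apply: join_lub; apply/res1; [exact: join_l | exact: join_r].
apply: join_lub; apply: mul_monor; [exact: join_l | exact: join_r].
Qed.
Lemma mul_joinl c a b : mul (jn a b) c = jn (mul a c) (mul b c).
Proof.
apply: le_anti.
  apply/res2; apply: join_lub; apply/res2; [exact: join_l | exact: join_r].
apply: join_lub; apply: mul_monol; [exact: join_l | exact: join_r].
Qed.
Lemma ld_e b : ld e b = b.
Proof.
apply: le_anti.
  by have := proj2 (res1 e (ld e b) b) (le_refl _); rewrite mul1l.
by apply/res1; rewrite mul1l; exact: le_refl.
Qed.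
Lemma rd_e b : rd b e = b.
Proof.
apply: le_anti.
  by have := proj2 (res2 (rd b e) e b) (le_refl _); rewrite mul1r.
by apply/res2; rewrite mul1r; exact: le_refl.
Qed.
Lemma mul_le_r a b : le a e -> le (mul b a) b.
Proof. move=> h; rewrite -{2}(mul1r b); exact: mul_monor. Qed.
Lemma mul_le_l a b : le a e -> le (mul a b) b.
Proof. move=> h; rewrite -{2}(mul1l b); exact: mul_monol. Qed.
Lemma lam_e b : lam e b = mt b e.
Proof. by rewrite /hlambda mul1r ld_e. Qed.
Lemma rho_e b : rho e b = mt b e.
Proof. by rewrite /hrho mul1l rd_e. Qed.

Definition Jn a b := [/\ le a e, le b e & le e (jn a b)].

Lemma Jn_sym a b : Jn a b -> Jn b a.
Proof. by case=> h1 h2 h3; split=> //; rewrite joinC. Qed.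

Lemma Jn_eq a b : Jn a b -> jn a b = e.
Proof. by case=> h1 h2 h3; apply: le_anti => //; apply: join_lub. Qed.

Lemma Jn_lam u a b : Jn a b -> Jn (lam u a) b.
Proof.
move=> J; have E := Jn_eq J; case: J => h1 h2 h3.
have := psl a b u e; rewrite E !ld_e rho_e.
have -> : mt b e = b by exact: h2.
move=> E2; split=> //; first exact: meet_r.
by rewrite E2; exact: le_refl.
Qed.

Lemma Jn_rho u a b : Jn a b -> Jn (rho u a) b.
Proof.
move=> J; have E := Jn_eq J; case: J => h1 h2 h3.
have := psl b a e u; rewrite (joinC b a) E !ld_e lam_e.
have -> : mt b e = b by exact: h2.
move=> E2; split=> //; first exact: meet_r.
by rewrite joinC E2; exact: le_refl.
Qed.

Lemma Jn_prod a b c : Jn a b -> Jn a c -> Jn a (mul b c).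
Proof.
move=> [ha hb hab] [_ hc hac]; split=> //.
  exact: le_trans (mul_le_r _ hc) hb.
apply: le_trans (_ : le e (mul (jn a b) (jn a c))) _.
  rewrite -{1}(mul1l e); apply: le_trans (mul_monol _ hab) _.
  exact: mul_monor.
rewrite mul_joinl !mul_joinr.
apply: join_lub; apply: join_lub.
- exact: le_trans (mul_le_r _ ha) (join_l _ _).
- exact: le_trans (mul_le_r _ hc) (join_l _ _).
- exact: le_trans (mul_le_l _ hb) (join_l _ _).
- exact: join_r.
Qed.

Lemma Jn_meet a b c : Jn a b -> Jn a c -> Jn a (mt b c).
Proof.
move=> J1 J2; have [ha hbc h] := Jn_prod J1 J2.
case: J1 => _ hb _; case: J2 => _ hc _.
split=> //; first exact: le_trans (meet_l _ _) hb.
apply: le_trans h _; apply: join_mono; apply: meet_glb.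
  exact: mul_le_r.
exact: mul_le_l.
Qed.

Definition Gam_l (l : seq T) d :=
  foldr (fun u acc => mt (mt (lam u d) (rho u d)) acc) e l.
Definition Gam d := Gam_l (enum T) d.

Lemma Gam_l_e l d : le (Gam_l l d) e.
Proof. elim: l => [|u l IH] /=; [exact: le_refl | exact: le_trans (meet_r _ _) IH]. Qed.

Lemma Gam_l_conj l d u : u \in l -> le (Gam_l l d) (lam u d) /\ le (Gam_l l d) (rho u d).
Proof.
elim: l => [|v l IH] //=; rewrite in_cons => /orP [/eqP -> | /IH [h1 h2]].
  split; apply: le_trans (meet_l _ _) _; [exact: meet_l | exact: meet_r].
by split; apply: le_trans (meet_r _ _) _.
Qed.

Lemma Gam_conj d u : le (Gam d) (lam u d) /\ le (Gam d) (rho u d).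
Proof. by apply: Gam_l_conj; rewrite mem_enum. Qed.

Lemma Gam_le d : le (Gam d) d.
Proof. have [h _] := Gam_conj d e; rewrite lam_e in h; exact: le_trans h (meet_l _ _). Qed.

Lemma Jn_Gam a b : Jn a b -> Jn (Gam a) b.
Proof.
move=> J; rewrite /Gam; elim: (enum T) => [|u l IH] /=.
  case: J => _ hb _; split=> //; [exact: le_refl | exact: join_l].
apply: Jn_sym; apply: Jn_meet; last exact: Jn_sym.
by apply: Jn_meet; apply: Jn_sym; [apply: Jn_lam | apply: Jn_rho].
Qed.

Definition Hst d := mul (Gam d) (Gam d).

Lemma Jn_Hst a b : Jn a b -> Jn (Hst a) b.
Proof. move=> /Jn_Gam /Jn_sym J; apply: Jn_sym; exact: Jn_prod. Qed.

Lemma Hst_le d : le (Hst d) d.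
Proof. apply: le_trans (Gam_le d); apply: mul_le_r; exact: Gam_l_e. Qed.

Definition gfix d := iter #|T| Hst d.

Lemma Jn_iter n a b : Jn a b -> Jn (iter n Hst a) (iter n Hst b).
Proof.
elim: n => [|n IH] //= J; apply: Jn_Hst; apply: Jn_sym; apply: Jn_Hst; apply: Jn_sym.
exact: IH.
Qed.

Lemma iter_le n d : le (iter n Hst d) d.
Proof. elim: n => [|n IH] /=; [exact: le_refl | exact: le_trans (Hst_le _) IH]. Qed.

Lemma gfix_fix d : Hst (gfix d) = gfix d.
Proof.
pose f k := iter k Hst d.
have dec : forall i k, le (f (i + k)) (f i).
  move=> i k; rewrite /f addnC iterD; exact: iter_le.
have [i Hi] : exists i : 'I_#|T|.+1, f i.+1 = f i.
  case: (boolP [exists i : 'I_#|T|.+1, f i.+1 == f i]) => [/existsP [i /eqP h]|hn].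
    by exists i.
  have inj : injective (fun i : 'I_#|T|.+1 => f i).
    move=> i j /= hij; apply: val_inj => /=.
    have key : forall i j : 'I_#|T|.+1, i < j -> f i = f j -> False.
      move=> i0 j0 lt h; move/negP: hn; apply; apply/existsP; exists i0.
      apply/eqP; apply: le_anti; first by have := dec i0 1; rewrite addn1.
      rewrite h; have -> : (j0 : nat) = i0.+1 + (j0 - i0.+1) by rewrite subnKC.
      exact: dec.
    case: (ltngtP i j) => // lt; first by case: (key _ _ lt hij).
    by case: (key _ _ lt (esym hij)).
  by have := @leq_card _ _ _ inj; rewrite card_ord ltnn.
have const : forall k, f (i + k) = f i.
  elim=> [|k IH]; first by rewrite addn0.
  by rewrite addnS /f iterS -/(f (i + k)) IH /f -iterS.
have : f #|T| = f i.
  have hi : (i : nat) <= #|T| by rewrite -ltnS.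
  by have := const (#|T| - i); rewrite subnKC.
rewrite /gfix -/(f #|T|) => ->.
by rewrite -iterS.
Qed.

Definition CI m := [/\ le m e, mul m m = m & forall u, mul m u = mul u m].

Lemma CI_gfix d : CI (gfix d).
Proof.
set g := gfix d.
have Hg : Hst g = g by exact: gfix_fix.
have Ge : le (Gam g) e by exact: Gam_l_e.
have GE : Gam g = g.
  apply: le_anti; first exact: Gam_le.
  rewrite -{1}Hg; exact: mul_le_r.
split.
- by rewrite -GE.
- by rewrite -{3}Hg /Hst GE.
- move=> u; have [h1 h2] := Gam_conj g u; rewrite GE in h1 h2.
  apply: le_anti.
    by move: (le_trans h2 (meet_l _ _)) => /res2.
  by move: (le_trans h1 (meet_l _ _)) => /res1.
Qed.

Lemma CI_mul m n : CI m -> CI n -> CI (mul m n).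
Proof.
move=> [m1 m2 m3] [n1 n2 n3]; split.
- exact: le_trans (mul_le_l _ m1) n1.
- by rewrite -mulA (mulA n m n) (n3 m) -(mulA m n n) n2 mulA m2.
- by move=> u; rewrite -mulA n3 mulA m3 mulA.
Qed.

Definition Good m := CI m /\ forall w, le (mul m w) e \/ le m w.

Definition dn m := [pred y | mt y m == y].

Lemma step m z : CI m -> ~ le (mul m z) e -> ~ (forall w, le (mul m w) e \/ le m w) ->
  exists n, [/\ CI n, ~ le (mul n z) e & #|dn n| < #|dn m|].
Proof.
move=> Cm Hz /not_all_ex_not [w /not_or_and [h1 h2]].
set P := mt (ld (jn w e) w) e; set Q := mt (ld (jn w e) e) e.
have JPQ : Jn P Q.
  split; try exact: meet_r.
  by have := psl w e e e; rewrite lam_e rho_e -/P -/Q => ->; exact: le_refl.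
have EG : jn (gfix P) (gfix Q) = e by apply: Jn_eq; exact: Jn_iter.
have C1 := CI_mul Cm (CI_gfix P); have C2 := CI_mul Cm (CI_gfix Q).
have Em : jn (mul m (gfix P)) (mul m (gfix Q)) = m by rewrite -mul_joinr EG mul1r.
case: (Cm) => me _ mc.
have card_lt : forall n, le n m -> ~ le m n -> #|dn n| < #|dn m|.
  move=> n hnm hmn; apply: proper_card; apply/properP; split.
    apply/subsetP => y; rewrite !inE => /eqP hy; apply/eqP; exact: le_trans hy hnm.
  exists m; rewrite !inE; first by apply/eqP; exact: le_refl.
  by apply/eqP; exact: hmn.
have ng : forall d, le (mul m (gfix d)) (gfix d) by move=> d; exact: mul_le_l.
have nm : forall d, le (mul m (gfix d)) m.
  move=> d; apply: mul_le_r; case: (CI_gfix d) => //.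
case: (classic (le (mul (mul m (gfix P)) z) e)) => hP.
  case: (classic (le (mul (mul m (gfix Q)) z) e)) => hQ.
    by exfalso; apply: Hz; rewrite -Em mul_joinl; exact: join_lub.
  exists (mul m (gfix Q)); split=> //; apply: card_lt => // hm.
  have hmQ : le m Q := le_trans hm (le_trans (ng Q) (iter_le _ _)).
  move: (le_trans hmQ (meet_l _ _)) => /res1 h3.
  apply: h1; rewrite mc; apply: le_trans h3; apply: mul_monol; exact: join_l.
exists (mul m (gfix P)); split=> //; apply: card_lt => // hm.
have hmP : le m P := le_trans hm (le_trans (ng P) (iter_le _ _)).
move: (le_trans hmP (meet_l _ _)) => /res1 h3.
apply: h2; apply: le_trans h3; rewrite -{1}(mul1l m); apply: mul_monol; exact: join_r.
Qed.

Lemma rep z : ~ le z e -> exists m, Good m /\ ~ le (mul m z) e.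
Proof.
move=> hz.
suff: forall k m, #|dn m| <= k -> CI m -> ~ le (mul m z) e ->
    exists m', Good m' /\ ~ le (mul m' z) e.
  move/(_ #|T| e); apply; first exact: max_card.
    split; [exact: le_refl | exact: mul1l | by move=> u; rewrite mul1l mul1r].
  by rewrite mul1l.
elim=> [|k IH] m hk Cm Hm;
  (case: (classic (forall w, le (mul m w) e \/ le m w)) => G; [by exists m|]);
  have [n [Cn Hn lt]] := step Cm Hm G.
  by have := leq_trans lt hk.
by apply: (IH n) => //; rewrite -ltnS; exact: leq_trans lt hk.
Qed.

Definition pw x n := iter n (mul x) e.

Lemma pw_add x a b : pw x (a + b) = mul (pw x a) (pw x b).
Proof.
elim: a => [|a IH]; first by rewrite add0n /= mul1l.
by rewrite addSn /pw /= -/(pw x (a + b)) IH mulA.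
Qed.

Lemma pw1 x : pw x 1 = x.
Proof. by rewrite /pw /= mul1r. Qed.

Lemma pw_Sr x n : pw x n.+1 = mul (pw x n) x.
Proof. by rewrite -addn1 pw_add pw1. Qed.

Lemma pw_Sl x n : pw x n.+1 = mul x (pw x n).
Proof. by []. Qed.

Lemma pw_idem x : exists N, 2 <= N /\ mul (pw x N) (pw x N) = pw x N.
Proof.
have : ~~ injectiveb (fun i : 'I_#|T|.+1 => pw x i).
  apply/negP => /injectiveP inj.
  by have := @leq_card _ _ _ inj; rewrite card_ord ltnn.
move/injectivePn => [i0 [j0 neq eq0]].
have [i [j [lt eqij]]] : exists i j, i < j /\ pw x i = pw x j.
  case: (ltngtP i0 j0) => h.
  - by exists i0, j0.
  - by exists j0, i0.
  - by move/eqP: neq; case; apply: val_inj.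
set p := j - i.
have per : forall k, pw x (i + k + p) = pw x (i + k).
  move=> k; rewrite -addnA (addnC k p) addnA /p (subnKC (ltnW lt)).
  rewrite !pw_add eqij; reflexivity.
have perT : forall t k, pw x (i + k + t * p) = pw x (i + k).
  elim=> [|t IH] k; first by rewrite mul0n addn0.
  by rewrite mulSn addnA -(addnA i k p) IH addnA per.
have p0 : 0 < p by rewrite subn_gt0.
have h2 : i + 2 <= p * (i + 2) := leq_pmull (i + 2) p0.
have hiN : i <= p * (i + 2) := leq_trans (leq_addr 2 i) h2.
exists (p * (i + 2)); split.
  exact: leq_trans (leq_addl i 2) h2.
rewrite -pw_add.
have E : i + (p * (i + 2) - i) + (i + 2) * p = p * (i + 2) + p * (i + 2).
  by rewrite subnKC // [(i + 2) * p]mulnC.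
by rewrite -E perT subnKC.
Qed.

Section Chain.
Variable m : T.
Hypothesis Gm : Good m.

Definition R a b := le (mul m a) b.

Lemma R_refl a : R a a.
Proof. case: Gm => [[me _ _] _]; exact: mul_le_l. Qed.
Lemma R_of_le a b : le a b -> R a b.
Proof. move=> h; exact: le_trans (R_refl a) h. Qed.
Lemma R_trans a b c : R a b -> R b c -> R a c.
Proof.
case: Gm => [[me mm _] _]; rewrite /R => h1 h2.
by rewrite -mm -mulA; apply: le_trans h2; exact: mul_monor.
Qed.
Lemma R_mulr c a b : R a b -> R (mul c a) (mul c b).
Proof.
case: Gm => [[me mm mc] _]; rewrite /R => h.
by rewrite mulA mc -mulA; exact: mul_monor.
Qed.
Lemma R_mull c a b : R a b -> R (mul a c) (mul b c).
Proof. rewrite /R => h; rewrite mulA; exact: mul_monol. Qed.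
Lemma R_tot w : R w e \/ R e w.
Proof. by case: Gm => _ h; rewrite /R mul1r. Qed.

Lemma chain x y : R (mul x y) e <-> R (mul x (mul x y)) e.
Proof.
have [N [N2 idem]] := pw_idem x.
set u := pw x N.
have x2 : mul x (mul x y) = mul (pw x 2) y by rewrite /pw /= mul1r mulA.
case: (R_tot x) => hx.
-
  have pwe : forall k, R (pw x k) e.
    elim=> [|k IH]; first exact: R_refl.
    by rewrite pw_Sl; apply: R_trans (R_mulr x IH) _; rewrite mul1r.
  split=> h.
    apply: R_trans h; rewrite -{2}(mul1l (mul x y)); exact: R_mull.
  case: (R_tot (mul x y)) => // hxy.
  have uy : R (mul u y) e.
    have -> : mul u y = mul (pw x (N - 2)) (mul x (mul x y)).
      by rewrite x2 mulA -pw_add subnK.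
    apply: R_trans (R_mulr _ h) _; rewrite mul1r; exact: pwe.
  have uyu : R (mul u y) u.
    have := R_mulr u uy; by rewrite mulA idem mul1r.
  have desc : forall j, j <= N -> R (pw x (N - j)) u.
    elim=> [|j IH] hj; first by rewrite subn0; exact: R_refl.
    have IH' := IH (ltnW hj).
    have hk : N - j = (N - j.+1).+1 by rewrite subnS prednK // subn_gt0.
    rewrite hk in IH'; set k := N - j.+1 in IH' *.
    rewrite -[pw x k]mul1r; apply: R_trans (R_mulr _ hxy) _.
    rewrite mulA -pw_Sr; apply: R_trans (R_mull y IH') uyu.
  have eu : R e u by have := desc N (leqnn N); rewrite subnn.
  have ux : R u x.
    rewrite /u -(subnK (ltnW N2)) addn1 pw_Sr.
    apply: R_trans (R_mull x (pwe _)) _; rewrite mul1l; exact: R_refl.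
  have ex : R e x := R_trans eu ux.
  apply: R_trans h; rewrite -{1}(mul1l (mul x y)); exact: R_mull.
-
  have epw : forall k, R e (pw x k).
    elim=> [|k IH]; first exact: R_refl.
    apply: R_trans IH _; rewrite pw_Sr -{1}(mul1r (pw x k)); exact: R_mulr.
  have pwup : forall j k, R (pw x j) (pw x (j + k)).
    by move=> j k; rewrite pw_add -{1}(mul1r (pw x j)); exact: R_mulr.
  split=> h; last first.
    apply: R_trans h; rewrite -{1}(mul1l (mul x y)); exact: R_mull.
  have x2u : R (pw x 2) u by rewrite /u -(subnKC N2); exact: pwup.
  rewrite x2.
  case: (R_tot (mul u y)) => hu.
    exact: R_trans (R_mull y x2u) hu.
  have uuy : R u (mul u y).
    have := R_mulr u hu; by rewrite mul1r mulA idem.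
  have desc : forall j, j <= N -> R u (pw x (N - j)).
    elim=> [|j IH] hj; first by rewrite subn0; exact: R_refl.
    have IH' := IH (ltnW hj).
    have hk : N - j = (N - j.+1).+1 by rewrite subnS prednK // subn_gt0.
    rewrite hk in IH'; set k := N - j.+1 in IH' *.
    apply: R_trans uuy _; apply: R_trans (R_mull y IH') _.
    rewrite pw_Sr -mulA; apply: R_trans (R_mulr _ h) _; rewrite mul1r; exact: R_refl.
  have ue : R u e by have := desc N (leqnn N); rewrite subnn.
  apply: R_trans (R_mull y x2u) _; apply: R_trans (R_mull y ue) _.
  rewrite mul1l; apply: R_trans _ h; rewrite -{1}(mul1l y); exact: R_mull.
Qed.

End Chain.

Lemma key x y : le (mul x y) e <-> le (mul x (mul x y)) e.
Proof.
split=> h; apply: NNPP => hn; have [m [Gm Hm]] := rep hn; apply: Hm.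
  exact: (proj1 (chain Gm x y) (R_of_le Gm h)).
exact: (proj2 (chain Gm x y) (R_of_le Gm h)).
Qed.

Lemma omega : omega_law S.
Proof.
move=> x; apply: le_anti.
  apply/res1; rewrite -mulA; apply: (proj1 (key x (ld x e))).
  exact: (proj2 (res1 x (ld x e) e) (le_refl _)).
apply/res1; apply: (proj2 (key x (ld (mul x x) e))).
rewrite mulA; exact: (proj2 (res1 (mul x x) (ld (mul x x) e) e) (le_refl _)).
Qed.

End Alg.

Theorem lemma2p6 :
  (forall (T : finType) (S : hpsul_ops T),
      HpsUL_star S -> is_chain S -> HpsUL_star_omega S /\ is_chain S) /\
  (forall (T : finType) (S : hpsul_ops T),
      HpsUL_star S -> HpsUL_star_omega S).
Proof.
split.
  move=> T S HW C; split; last exact: C.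
  split; first exact: HW.
  exact: (omega (proj1 HW)).
move=> T S HW; split; first exact: HW.
exact: (omega (proj1 HW)).
Qed.
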